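(* In the setting of the context, for every $H\in\mathbb S^n$, $$\langle\mathcal D(H),\mathcal D^\perp(H)\rangle=2\langle\Theta\circ H_O,\Theta^\perp\circ H_O\rangle\ge0,$$ with equality only if $H_O=0$, and $$\|H\|_F^2-\|\mathcal M(H)\|_F^2=\|\mathcal P\mathcal D(H)\|_F^2+\|\mathcal P^\perp\mathcal D^\perp(H)\|_F^2+4\langle\Theta\circ H_O,\Theta^\perp\circ H_O\rangle.$$
   Context: $\mathbb S^n$: real symmetric $n\times n$ matrices, $\langle X,Y\rangle=\operatorname{tr}(X^\top Y)$, Frobenius norm. $\mathcal AX=(\langle A_i,X\rangle)_{i=1}^m$ with $A_i\in\mathbb S^n$, surjective; $\mathcal P=\mathcal A^*(\mathcal A\mathcal A^* )^{-1}\mathcal A$, $\mathcal P^\perp=\mathrm{Id}-\mathcal P$. $Z_\star=X_\star-\sigma S_\star$ ($\sigma>0$) for a strictly complementary KKT point of the SDP pair min $\langle C,X\rangle$ s.t. $\mathcal AX=b$, $X\succeq0$ / max $b^\top y$ s.t. $\mathcal A^*y+S=C$, $S\succeq0$; $Z_\star=Q_\star\operatorname{diag}(\lambda_1,\dots,\lambda_n)Q_\star^\top$ with $Q_\star$ orthogonal, $\lambda_1\ge\dots\ge\lambda_r>0>\lambda_{r+1}\ge\dots\ge\lambda_n$, $r=\operatorname{rank}X_\star$. $\Theta\in\mathbb R^{(n-r)\times r}$, $\Theta_{ij}=\lambda_j/(\lambda_j-\lambda_{i+r})$; $\Theta^\perp=E_{(n-r)\times r}-\Theta$ (all-ones minus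 $\Theta$); $\Omega=\begin{pmatrix}E_r&\Theta^\top\\\Theta&0\end{pmatrix}$. For $H\in\mathbb S^n$, $Q_\star^\top HQ_\star=\begin{pmatrix}H_X&H_O^\top\\H_O&H_S\end{pmatrix}$ with $H_O\in\mathbb R^{(n-r)\times r}$. $\mathcal D(H)=Q_\star(\Omega\circ(Q_\star^\top HQ_\star))Q_\star^\top$ ($\circ$ Hadamard), $\mathcal D^\perp(H)=H-\mathcal D(H)$, $\mathcal M(H)=\mathcal P\mathcal D^\perp(H)+\mathcal P^\perp\mathcal D(H)$. *)

(* Defs.v *)
From mathcomp Require Import all_boot all_order all_algebra.
Set Implicit Arguments. Unset Strict Implicit. Unset Printing Implicit Defensive.
Import Order.TTheory GRing.Theory Num.Theory.
Local Open Scope ring_scope.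

Section Defs.
Variable R : realFieldType.

Definition frob (n : nat) (X Y : 'M[R]_n) : R := \tr (X^T *m Y).
Definition frob2 (n : nat) (X : 'M[R]_n) : R := frob X X.

Definition symmx (n : nat) (X : 'M[R]_n) : Prop := X^T = X.
Definition psdmx (n : nat) (X : 'M[R]_n) : Prop :=
  symmx X /\ forall u : 'cV[R]_n, 0 <= (u^T *m X *m u) 0 0.
Definition orthogonalmx (n : nat) (Q : 'M[R]_n) : Prop := Q^T *m Q = 1%:M.

Definition Aop (n m : nat) (A : 'I_m -> 'M[R]_n) (X : 'M[R]_n) : 'cV[R]_m :=
  \col_i frob (A i) X.
Definition Aadj (n m : nat) (A : 'I_m -> 'M[R]_n) (y : 'cV[R]_m) : 'M[R]_n :=
  \sum_(i < m) (y i 0 *: A i).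
Definition AAadj (n m : nat) (A : 'I_m -> 'M[R]_n) : 'M[R]_m :=
  \matrix_(i, j) frob (A i) (A j).
Definition Pop (n m : nat) (A : 'I_m -> 'M[R]_n) (H : 'M[R]_n) : 'M[R]_n :=
  Aadj A (invmx (AAadj A) *m Aop A H).
Definition Pperp (n m : nat) (A : 'I_m -> 'M[R]_n) (H : 'M[R]_n) : 'M[R]_n :=
  H - Pop A H.
Definition Asurj (n m : nat) (A : 'I_m -> 'M[R]_n) : Prop :=
  forall v : 'cV[R]_m, exists X : 'M[R]_n, symmx X /\ Aop A X = v.

(* Indices of 'I_n: the first r are the "X-block", the rest the "S-block".
   Theta_{ij} = lam_j/(lam_j - lam_{i+r}) is stored at the (i+r, j) position,
   i.e. ThetaE lam i j = lam j / (lam j - lam i) for r <= i, j < r. *)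
Definition ThetaE (n : nat) (lam : 'I_n -> R) (i j : 'I_n) : R :=
  lam j / (lam j - lam i).

(* Omega = [[E_r, Theta^T],[Theta, 0]] *)
Definition Omega (n r : nat) (lam : 'I_n -> R) : 'M[R]_n :=
  \matrix_(i, j)
    if (i < r)%N then
      (if (j < r)%N then 1 else ThetaE lam j i)
    else (if (j < r)%N then ThetaE lam i j else 0).

Definition Dop (n r : nat) (Q : 'M[R]_n) (lam : 'I_n -> R) (H : 'M[R]_n)
  : 'M[R]_n :=
  Q *m (map2_mx (fun a b => a * b) (Omega r lam) (Q^T *m H *m Q)) *m Q^T.
Definition Dperp (n r : nat) (Q : 'M[R]_n) (lam : 'I_n -> R) (H : 'M[R]_n)
  : 'M[R]_n := H - Dop r Q lam H.
Definition Mop (n m r : nat) (A : 'I_m -> 'M[R]_n) (Q : 'M[R]_n)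
  (lam : 'I_n -> R) (H : 'M[R]_n) : 'M[R]_n :=
  Pop A (Dperp r Q lam H) + Pperp A (Dop r Q lam H).

(* H_O entries: (Q^T H Q)_{ij} with r <= i, j < r *)
Definition HOe (n : nat) (Q : 'M[R]_n) (H : 'M[R]_n) (i j : 'I_n) : R :=
  (Q^T *m H *m Q) i j.

Definition ThetaIP (n r : nat) (Q : 'M[R]_n) (lam : 'I_n -> R) (H : 'M[R]_n) : R :=
  \sum_(i : 'I_n | (r <= i)%N) \sum_(j : 'I_n | (j < r)%N)
     (ThetaE lam i j * HOe Q H i j) * ((1 - ThetaE lam i j) * HOe Q H i j).

End Defs.

(* Main.v *)
Require Import Defs.
From mathcomp Require Import all_boot all_order all_algebra.
From mathcomp Require Import ring lra.
Import Order.TTheory GRing.Theory Num.Theory.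
Local Open Scope ring_scope.

Section Aux.
Variable R : realFieldType.

Lemma frobE n (X Y : 'M[R]_n) : frob X Y = \sum_i \sum_j X i j * Y i j.
Proof.
rewrite /frob /mxtrace exchange_big /=; apply: eq_bigr => i _; rewrite mxE.
by apply: eq_bigr => j _; rewrite mxE.
Qed.

Lemma frobC n (X Y : 'M[R]_n) : frob X Y = frob Y X.
Proof. by rewrite !frobE; apply: eq_bigr => i _; apply: eq_bigr => j _; rewrite mulrC. Qed.

Lemma frobDl n (X Y Z : 'M[R]_n) : frob (X + Y) Z = frob X Z + frob Y Z.
Proof.
rewrite !frobE -big_split; apply: eq_bigr => i _; rewrite -big_split.
by apply: eq_bigr => j _; rewrite mxE mulrDl.
Qed.

Lemma frobDr n (X Y Z : 'M[R]_n) : frob Z (X + Y) = frob Z X + frob Z Y.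
Proof. by rewrite frobC frobDl -!(frobC _ Z). Qed.

Lemma frob2D n (X Y : 'M[R]_n) : frob2 (X + Y) = frob2 X + 2 * frob X Y + frob2 Y.
Proof. rewrite /frob2 frobDl !frobDr (frobC _ Y X); ring. Qed.

Lemma frob_orth n (Q X Y : 'M[R]_n) : Q^T *m Q = 1%:M ->
  frob (Q *m X *m Q^T) (Q *m Y *m Q^T) = frob X Y.
Proof.
move=> hQ; rewrite /frob !trmx_mul trmxK.
rewrite -!mulmxA (mulmxA Q^T Q) hQ mul1mx mxtrace_mulC -!mulmxA.
by rewrite hQ mulmx1.
Qed.

Lemma frob2_eq0 n (X : 'M[R]_n) : frob2 X = 0 -> X = 0.
Proof.
rewrite /frob2 frobE => h; apply/matrixP => i j; rewrite mxE.
have h0 : forall k : 'I_n, true -> 0 <= \sum_j X k j * X k j.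
  by move=> k _; apply: sumr_ge0 => l _; by rewrite -expr2 sqr_ge0.
have := psumr_eq0P h0 h (i:=i) isT.
have h0' : forall l : 'I_n, true -> 0 <= X i l * X i l by move=> l _; by rewrite -expr2 sqr_ge0.
move/(psumr_eq0P h0') => /(_ j isT) /eqP.
by rewrite mulf_eq0 orbb => /eqP.
Qed.

Lemma frob0l n (Y : 'M[R]_n) : frob 0 Y = 0.
Proof. by rewrite frobE big1 // => i _; rewrite big1 // => j _; rewrite mxE mul0r. Qed.

Lemma frobNr n (X Y : 'M[R]_n) : frob X (- Y) = - frob X Y.
Proof.
rewrite !frobE -sumrN; apply: eq_bigr => i _; rewrite -sumrN.
by apply: eq_bigr => j _; rewrite mxE mulrN.
Qed.

Lemma frobZl n a (X Y : 'M[R]_n) : frob (a *: X) Y = a * frob X Y.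
Proof.
rewrite !frobE mulr_sumr; apply: eq_bigr => i _; rewrite mulr_sumr.
by apply: eq_bigr => j _; rewrite mxE mulrA.
Qed.

Lemma frob_suml n m (F : 'I_m -> 'M[R]_n) Y :
  frob (\sum_i F i) Y = \sum_i frob (F i) Y.
Proof. by elim/big_rec2: _ => [|i x y _ hx]; rewrite ?frob0l ?frobDl ?hx. Qed.

Variables (n m : nat) (A : 'I_m -> 'M[R]_n).

Lemma frob_Aadj (y : 'cV_m) Y : frob (Aadj A y) Y = \sum_i y i 0 * Aop A Y i 0.
Proof. by rewrite /Aadj frob_suml; apply: eq_bigr => i _; rewrite frobZl mxE. Qed.

Lemma Aop_Aadj y : Aop A (Aadj A y) = AAadj A *m y.
Proof.
apply/matrixP => k l; rewrite (ord1 l) !mxE frobC frob_Aadj.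
by apply: eq_bigr => i _; rewrite !mxE frobC mulrC.
Qed.

Lemma AAadj_sym : (AAadj A)^T = AAadj A.
Proof. by apply/matrixP => i j; rewrite !mxE frobC. Qed.

Lemma AAadj_unit : Asurj A -> AAadj A \in unitmx.
Proof.
move=> hs; rewrite unitmxE unitfE; apply/negP => /det0P [v vn0 hv].
set Z := Aadj A v^T.
have hZ : Aop A Z = 0.
  have : (v *m AAadj A)^T = 0 by rewrite hv trmx0.
  by rewrite trmx_mul AAadj_sym /Z Aop_Aadj.
have Z0 : Z = 0.
  apply: frob2_eq0; rewrite /frob2 {1}/Z frob_Aadj hZ.
  by rewrite big1 // => i _; rewrite !mxE mulr0.
case: (hs v^T) => X [_ hX].
have : frob Z X = 0 by rewrite Z0 frob0l.
rewrite /Z frob_Aadj hX => h.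
have h0 : forall l : 'I_m, true -> 0 <= v^T l 0 * v^T l 0.
  by move=> l _; rewrite -expr2 sqr_ge0.
move/negP: vn0; apply; apply/eqP/matrixP => i j; rewrite (ord1 i) mxE.
have /eqP := psumr_eq0P h0 h (i:=j) isT.
by rewrite mulf_eq0 orbb mxE => /eqP.
Qed.

Lemma Pop_idem X : Asurj A -> Pop A (Pop A X) = Pop A X.
Proof.
move=> hs; rewrite {1}/Pop {2}/Pop Aop_Aadj [AAadj A *m _]mulmxA mulmxV ?mul1mx //.
exact: AAadj_unit.
Qed.

Lemma Pop_sym X Y : frob (Pop A X) Y = frob X (Pop A Y).
Proof.
set Gi := invmx (AAadj A).
have hs i k : Gi i k = Gi k i.
  have : Gi^T = Gi by rewrite /Gi trmx_inv AAadj_sym.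
  by move/matrixP => /(_ k i); rewrite mxE.
rewrite (frobC _ X) /Pop !frob_Aadj.
under eq_bigr => i _ do rewrite mxE big_distrl.
under [RHS]eq_bigr => i _ do rewrite mxE big_distrl.
rewrite [RHS]exchange_big /=; apply: eq_bigr => i _; apply: eq_bigr => k _.
by rewrite hs; ring.
Qed.

Lemma Pop_orth X Y : Asurj A -> frob (Pop A X) (Pperp A Y) = 0.
Proof.
move=> hs; rewrite /Pperp frobDr frobNr !Pop_sym Pop_idem //.
by rewrite subrr.
Qed.

Lemma frob2_split X : Asurj A -> frob2 X = frob2 (Pop A X) + frob2 (Pperp A X).
Proof.
move=> hs; rewrite {1}(_ : X = Pop A X + Pperp A X); last by rewrite /Pperp addrC subrK.
by rewrite frob2D Pop_orth // mulr0 addr0.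
Qed.


Lemma sum_blocks (k r : nat) (f : 'I_k -> 'I_k -> R) :
  (forall i j : 'I_k, (i < r)%N -> (j < r)%N -> f i j = 0) ->
  (forall i j : 'I_k, (r <= i)%N -> (r <= j)%N -> f i j = 0) ->
  \sum_i \sum_j f i j = \sum_(i : 'I_k | (r <= i)%N) \sum_(j : 'I_k | (j < r)%N) (f i j + f j i).
Proof.
move=> h1 h2.
rewrite (bigID (fun i : 'I_k => (i < r)%N)) /=.
have e1 : \sum_(i : 'I_k | (i < r)%N) \sum_j f i j
          = \sum_(i : 'I_k | (i < r)%N) \sum_(j : 'I_k | (r <= j)%N) f i j.
  apply: eq_bigr => i hi; rewrite (bigID (fun j : 'I_k => (j < r)%N)) /= big1 ?add0r.
    by apply: eq_bigl => j; rewrite -leqNgt.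
  by move=> j hj; apply: h1.
have e2 : \sum_(i : 'I_k | ~~ (i < r)%N) \sum_j f i j
          = \sum_(i : 'I_k | (r <= i)%N) \sum_(j : 'I_k | (j < r)%N) f i j.
  rewrite (eq_bigl (fun i : 'I_k => (r <= i)%N)); last by move=> i; rewrite -leqNgt.
  apply: eq_bigr => i hi; rewrite (bigID (fun j : 'I_k => (j < r)%N)) /=.
  rewrite [X in _ + X]big1 ?addr0 // => j; rewrite -leqNgt; exact: h2.
rewrite e1 e2 [X in X + _]exchange_big /= addrC -big_split /=.
by apply: eq_bigr => i _; rewrite -big_split.
Qed.

Lemma blocks_calc k r (lam : 'I_k -> R) (G : 'M[R]_k) :
  (forall i j, G i j = G j i) ->
  frob (map2_mx (fun a b => a * b) (Omega r lam) G)
       (G - map2_mx (fun a b => a * b) (Omega r lam) G)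
  = 2 * \sum_(i : 'I_k | (r <= i)%N) \sum_(j : 'I_k | (j < r)%N)
     (ThetaE lam i j * G i j) * ((1 - ThetaE lam i j) * G i j).
Proof.
move=> Gs; rewrite frobE (@sum_blocks k r (fun i j => map2_mx (fun a b => a * b) (Omega r lam) G i j * (G - map2_mx (fun a b => a * b) (Omega r lam) G) i j)).
- rewrite mulr_sumr; apply: eq_bigr => i hi; rewrite mulr_sumr; apply: eq_bigr => j hj.
  have hi' : (i < r)%N = false by rewrite ltnNge hi.
  rewrite !mxE hi' hj (Gs j i); ring.
- by move=> i j hi hj; rewrite !mxE hi hj; ring.
- move=> i j hi hj.
  have hi' : (i < r)%N = false by rewrite ltnNge hi.
  have hj' : (j < r)%N = false by rewrite ltnNge hj.
  by rewrite !mxE hi' hj'; ring.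
Qed.

Lemma theta_term (li lj g : R) : 0 < lj -> li < 0 ->
  (lj / (lj - li) * g) * ((1 - lj / (lj - li)) * g) = (lj * - li) / (lj - li) ^+ 2 * g ^+ 2.
Proof.
move=> hj hi; have hne : lj - li != 0 by rewrite lt0r_neq0 // subr_gt0 (lt_trans hi hj).
by field.
Qed.

End Aux.
Theorem lemma2 (R : realFieldType) (n m : nat)
  (A : 'I_m -> 'M[R]_n) (b : 'cV[R]_m) (C : 'M[R]_n)
  (Xs Ss : 'M[R]_n) (ys : 'cV[R]_m) (sigma : R)
  (Q : 'M[R]_n) (lam : 'I_n -> R) (r : nat) :
  (forall i, symmx (A i)) ->
  Asurj A ->
  symmx C ->
  (* KKT point *)
  Aop A Xs = b -> psdmx Xs ->
  Aadj A ys + Ss = C -> psdmx Ss ->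
  frob Xs Ss = 0 ->
  (* strict complementarity *)
  (\rank Xs + \rank Ss)%N = n ->
  0 < sigma ->
  (* eigendecomposition of Z = X - sigma S *)
  orthogonalmx Q ->
  Xs - sigma *: Ss = Q *m diag_mx (\row_i lam i) *m Q^T ->
  r = \rank Xs ->
  (forall i j : 'I_n, (i <= j)%N -> lam j <= lam i) ->
  (forall i : 'I_n, (i < r)%N -> 0 < lam i) ->
  (forall i : 'I_n, (r <= i)%N -> lam i < 0) ->
  forall H : 'M[R]_n, symmx H ->
    [/\ frob (Dop r Q lam H) (Dperp r Q lam H) = 2 * ThetaIP r Q lam H,
        0 <= ThetaIP r Q lam H,
        (frob (Dop r Q lam H) (Dperp r Q lam H) = 0 ->
           forall i j : 'I_n, (r <= i)%N -> (j < r)%N -> HOe Q H i j = 0) &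
        frob2 H - frob2 (Mop r A Q lam H)
          = frob2 (Pop A (Dop r Q lam H)) + frob2 (Pperp A (Dperp r Q lam H))
            + 4 * ThetaIP r Q lam H].
Proof.
move=> _ hs _ _ _ _ _ _ _ _ hQ _ _ _ hpos hneg H hH.
have QQt : Q *m Q^T = 1%:M by apply: mulmx1C.
pose G := Q^T *m H *m Q.
have Gs : forall i j, G i j = G j i.
  have : G^T = G by rewrite /G !trmx_mul trmxK hH mulmxA.
  by move=> e i j; rewrite -{1}e mxE.
pose W := map2_mx (fun a b => a * b) (Omega r lam) G.
have hD : Dop r Q lam H = Q *m W *m Q^T by [].
have hH' : H = Q *m G *m Q^T.
  by rewrite /G !mulmxA QQt mul1mx -mulmxA QQt mulmx1.
have hDp : Dperp r Q lam H = Q *m (G - W) *m Q^T.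
  by rewrite /Dperp hD {1}hH' mulmxBr mulmxBl.
have key : frob (Dop r Q lam H) (Dperp r Q lam H) = 2 * ThetaIP r Q lam H.
  by rewrite hD hDp frob_orth // blocks_calc.
have term : forall i j : 'I_n, (r <= i)%N -> (j < r)%N ->
    ThetaE lam i j * HOe Q H i j * ((1 - ThetaE lam i j) * HOe Q H i j)
    = (lam j * - lam i) / (lam j - lam i) ^+ 2 * HOe Q H i j ^+ 2.
  by move=> i j hi hj; rewrite /ThetaE theta_term ?hpos ?hneg.
have cpos : forall i j : 'I_n, (r <= i)%N -> (j < r)%N ->
    0 < (lam j * - lam i) / (lam j - lam i) ^+ 2.
  move=> i j hi hj; have := hpos j hj; have := hneg i hi => a0 b0.
  apply: divr_gt0; first by apply: mulr_gt0 => //; rewrite oppr_gt0.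
  by apply: exprn_gt0; rewrite subr_gt0 (lt_trans a0 b0).
have inner0 : forall i : 'I_n, (r <= i)%N -> forall j : 'I_n, (j < r)%N ->
    0 <= ThetaE lam i j * HOe Q H i j * ((1 - ThetaE lam i j) * HOe Q H i j).
  move=> i hi j hj; rewrite term //.
  by apply: mulr_ge0; [apply: ltW; exact: cpos | exact: sqr_ge0].
have nn : 0 <= ThetaIP r Q lam H.
  by apply: sumr_ge0 => i hi; apply: sumr_ge0 => j hj; exact: inner0.
split => //.
- move=> h0 i j hi hj.
  have t0 : ThetaIP r Q lam H = 0.
    by move: h0; rewrite key => /eqP; rewrite mulf_eq0 pnatr_eq0 /= => /eqP.
  have h1 := psumr_eq0P (fun i hi => sumr_ge0 _ (fun j hj => inner0 i hi j hj)) t0 hi.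
  have := psumr_eq0P (inner0 i hi) h1 hj.
  rewrite term // => /eqP; rewrite mulf_eq0 (gt_eqF (cpos _ _ hi hj)) /=.
  by rewrite sqrf_eq0 => /eqP.
- set D := Dop r Q lam H; set E := Dperp r Q lam H.
  have eH : H = D + E by rewrite /E /Dperp addrC subrK.
  have fH : frob2 H = frob2 D + 2 * frob D E + frob2 E by rewrite {1}eH frob2D.
  rewrite /Mop -/D -/E fH frob2D Pop_orth // key (@frob2_split _ _ _ A D hs) (@frob2_split _ _ _ A E hs).
  ring.
Qed.
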